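(* Let $k\ge 2$ and $\Delta\ge 2$ be integers and $f(z)=\frac{(1-z^{k-1})^{\Delta-1}}{1+(1-z^{k-1})^{\Delta-1}}$ for $z\in[0,1]$. Then $f$ is strictly decreasing on $[0,1]$, and there is a unique $x\in[0,1]$ with $f(x)=x$; this $x$ satisfies $|f'(x)|=\frac{(\Delta-1)(k-1)x^{k-1}(1-x)}{1-x^{k-1}}$. Finally, if $|f'(x)|<1$, then the equation $f(f(z))=z$ for $z\in[0,1]$ is satisfied only by $z=x$. *)

(* Defs.v *)
From Stdlib Require Import Reals.
From Coquelicot Require Import Coquelicot.
Open Scope R_scope.

Definition f56 (k Delta : nat) (z : R) : R :=
  (1 - z ^ (k - 1)) ^ (Delta - 1) / (1 + (1 - z ^ (k - 1)) ^ (Delta - 1)).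

(* Main.v *)
Require Import Defs.
From Stdlib Require Import Reals Lra Lia Classical Ranalysis5.
From Coquelicot Require Import Coquelicot.
Open Scope R_scope.

Lemma pow_01 : forall n t, 0 <= t <= 1 -> 0 <= t ^ n <= 1.
Proof.
  induction n; intros t Ht; simpl. lra.
  destruct (IHn t Ht). split; nra.
Qed.

Lemma pow_pos' : forall n t, 0 < t -> 0 < t ^ n.
Proof. intros; apply pow_lt; auto. Qed.

Lemma pow_strict : forall n a b, 0 <= a -> a < b -> a ^ (S n) < b ^ (S n).
Proof.
  induction n; intros a b Ha Hab. simpl; lra.
  change (a * a ^ (S n) < b * b ^ (S n)).
  assert (H := IHn a b Ha Hab).
  assert (0 <= a ^ S n) by (apply pow_le; auto).
  nra.
Qed.

Lemma pow_decr : forall n t, 0 <= t <= 1 -> t ^ (S n) <= t ^ n.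
Proof. intros n t Ht; simpl. destruct (pow_01 n t Ht). nra. Qed.

Lemma F0 : forall a t, 0 <= t <= 1 -> 1 - t ^ (S a) <= INR (S a) * (1 - t).
Proof.
  induction a; intros t Ht. simpl; lra.
  assert (H := IHa t Ht). rewrite S_INR.
  assert (E : 1 - t ^ S (S a) = (1 - t ^ S a) + t ^ S a * (1 - t)) by (simpl; ring).
  rewrite E. destruct (pow_01 (S a) t Ht). nra.
Qed.

Lemma F1 : forall a t, 0 <= t <= 1 -> INR (S a) * t ^ a * (1 - t) <= 1 - t ^ (S a).
Proof.
  induction a; intros t Ht. simpl; lra.
  assert (H := IHa t Ht). rewrite S_INR.
  assert (E : 1 - t ^ S (S a) = (1 - t ^ S a) + t ^ S a * (1 - t)) by (simpl; ring).
  rewrite E. assert (Hd := pow_decr a t Ht).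
  assert (0 <= INR (S a)) by apply pos_INR.
  assert (0 <= INR (S a) * (1 - t) * (t ^ a - t ^ S a)).
  { apply Rmult_le_pos; [apply Rmult_le_pos|]; lra. }
  simpl in *. nra.
Qed.

Definition gg a b t := (1 - t ^ (S a)) ^ (S b).
Definition FF a b t := gg a b t / (1 + gg a b t).

Lemma gg_01 : forall a b t, 0 <= t <= 1 -> 0 <= gg a b t <= 1.
Proof.
  intros. unfold gg. apply pow_01. destruct (pow_01 (S a) t H). lra.
Qed.

Lemma gg_pos : forall a b t, 0 <= t < 1 -> 0 < gg a b t.
Proof.
  intros. unfold gg. apply pow_lt.
  destruct (Req_dec t 0). subst. simpl. lra.
  assert (t ^ S a < 1 ^ S a) by (apply pow_strict; lra). rewrite pow1 in H1. lra.
Qed.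

Lemma gg_decr : forall a b s t, 0 <= s -> s < t -> t <= 1 -> gg a b t < gg a b s.
Proof.
  intros. unfold gg. destruct (pow_01 (S a) t). lra.
  apply pow_strict. lra.
  assert (s ^ S a < t ^ S a) by (apply pow_strict; lra). lra.
Qed.

Lemma FF_decr : forall a b s t, 0 <= s -> s < t -> t <= 1 -> FF a b t < FF a b s.
Proof.
  intros. unfold FF. assert (H2 := gg_decr a b s t H H0 H1).
  destruct (gg_01 a b t). lra. destruct (gg_01 a b s). lra.
  apply Rmult_lt_reg_r with ((1 + gg a b t) * (1 + gg a b s)). nra.
  replace (gg a b t / (1 + gg a b t) * ((1 + gg a b t) * (1 + gg a b s))) with (gg a b t * (1 + gg a b s)) by (field; lra).
  replace (gg a b s / (1 + gg a b s) * ((1 + gg a b t) * (1 + gg a b s))) with (gg a b s * (1 + gg a b t)) by (field; lra).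
  nra.
Qed.

Lemma FF_range : forall a b t, 0 <= t <= 1 -> 0 <= FF a b t <= 1/2.
Proof.
  intros. unfold FF. destruct (gg_01 a b t H). split.
  apply Rdiv_le_0_compat; lra.
  apply Rmult_le_reg_r with (1 + gg a b t). lra.
  replace (gg a b t / (1 + gg a b t) * (1 + gg a b t)) with (gg a b t) by (field; lra).
  lra.
Qed.

Lemma FF_pos : forall a b t, 0 <= t < 1 -> 0 < FF a b t.
Proof.
  intros. unfold FF. assert (H0 := gg_pos a b t H). apply Rdiv_lt_0_compat; lra.
Qed.

Lemma FF_0 : forall a b, FF a b 0 = 1/2.
Proof. intros. unfold FF, gg. rewrite pow_i by lia. rewrite Rminus_0_r, pow1. field. Qed.

Lemma FF_1 : forall a b, FF a b 1 = 0.
Proof. intros. unfold FF, gg. rewrite pow1, Rminus_eq_0, pow_i by lia. field. Qed.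

Definition FF' a b t := - (INR (S b) * INR (S a) * t ^ a * (1 - t ^ (S a)) ^ b) / (1 + gg a b t) ^ 2.


Lemma FF_deriv : forall a b t, 0 <= t <= 1 -> is_derive (FF a b) t (FF' a b t).
Proof.
  intros. destruct (gg_01 a b t H) as [G0 G1].
  unfold FF, FF'. unfold gg in *. auto_derive.
  - simpl in G0. unfold Rminus in G0. lra.
  - simpl. simpl in G0. unfold Rminus in *. field. lra.
Qed.


Lemma FF_cont : forall a b t, 0 <= t <= 1 -> continuity_pt (FF a b) t.
Proof.
  intros. apply derivable_continuous_pt. exists (FF' a b t).
  apply is_derive_Reals. apply FF_deriv; auto.
Qed.

Lemma fix_exists : forall a b, {x | 0 <= x <= 1 /\ FF a b x = x}.
Proof.
  intros.
  destruct (IVT_interv (fun z => z - FF a b z) 0 1) as [x [Hx Hf]].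
  - intros t Ht. apply continuity_pt_minus. apply continuity_pt_id. apply FF_cont; auto.
  - lra.
  - rewrite FF_0. lra.
  - rewrite FF_1. lra.
  - exists x. split; auto. lra.
Qed.

Lemma fix_unique : forall a b x y, 0 <= x <= 1 -> 0 <= y <= 1 -> FF a b x = x -> FF a b y = y -> y = x.
Proof.
  intros. destruct (Rtotal_order y x) as [H3|[H3|H3]]; auto.
  - assert (H4 := FF_decr a b y x ltac:(lra) H3 ltac:(lra)). lra.
  - assert (H4 := FF_decr a b x y ltac:(lra) H3 ltac:(lra)). lra.
Qed.

Lemma FF'_cyc : forall a b t w, 0 <= t < 1 -> FF a b t = w ->
  FF' a b t = - (INR (S b) * INR (S a) * t ^ a * (w * (1 - w))) / (1 - t ^ (S a)).
Proof.
  intros a b t w Ht Hw. unfold FF' in *. unfold FF in Hw. subst w.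
  assert (Hg := gg_pos a b t Ht).
  assert (Hq : 0 < 1 - t ^ S a).
  { destruct (Req_dec t 0). subst. simpl. lra.
    assert (t ^ S a < 1 ^ S a) by (apply pow_strict; lra). rewrite pow1 in H0. lra. }
  unfold gg in *. change ((1 - t ^ S a) ^ S b) with ((1 - t ^ S a) * (1 - t ^ S a) ^ b) in *.
  field. lra.
Qed.


Lemma q_pos : forall a t, 0 <= t < 1 -> 0 < 1 - t ^ (S a).
Proof.
  intros. destruct (Req_dec t 0). subst. simpl. lra.
  assert (t ^ S a < 1 ^ S a) by (apply pow_strict; lra). rewrite pow1 in H1. lra.
Qed.

Definition uu a t := t ^ (S a) * (1 - t) / (1 - t ^ (S a)).
Definition uu' a t := t ^ a * (INR (S a) - (INR (S a) + 1) * t + t ^ (S (S a))) / (1 - t ^ (S a)) ^ 2.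

Lemma uu_deriv : forall a t, 0 <= t < 1 -> is_derive (uu a) t (uu' a t).
Proof.
  intros. assert (Hq := q_pos a t H). unfold uu, uu'. auto_derive.
  - simpl in Hq. unfold Rminus in Hq. lra.
  - simpl. simpl in Hq. unfold Rminus in *. field. lra.
Qed.

Lemma uu'_bounds : forall a t, 0 <= t < 1 -> 0 <= uu' a t <= 1.
Proof.
  intros. assert (Hq := q_pos a t H). unfold uu'.
  assert (H0 := F0 a t ltac:(lra)). assert (H1 := F1 a t ltac:(lra)).
  assert (Hta : 0 <= t ^ a) by (apply pow_le; lra).
  assert (HM : 0 <= INR (S a)) by apply pos_INR.
  set (q := 1 - t ^ S a) in *.
  assert (E : INR (S a) - (INR (S a) + 1) * t + t ^ S (S a) = INR (S a) * (1 - t) - t * q).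
  { unfold q. simpl. ring. }
  rewrite E.
  assert (N0 : 0 <= INR (S a) * (1 - t) - t * q).
  { assert (t * q <= t * (INR (S a) * (1 - t))) by (apply Rmult_le_compat_l; lra). nra. }
  assert (N1 : INR (S a) * (1 - t) - t * q <= INR (S a) * (1 - t) * q).
  { assert (Ht : t ^ S a = t * t ^ a) by reflexivity.
    assert (q - INR (S a) * (1 - t) * t ^ a >= 0) by lra.
    assert (INR (S a) * (1 - t) * q - (INR (S a) * (1 - t) - t * q) = t * (q - INR (S a) * (1 - t) * t ^ a)).
    { unfold q. rewrite Ht. ring. }
    assert (0 <= t * (q - INR (S a) * (1 - t) * t ^ a)) by (apply Rmult_le_pos; lra). lra. }
  split.
  - apply Rdiv_le_0_compat. apply Rmult_le_pos; lra. apply pow_lt; lra.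
  - apply Rmult_le_reg_r with (q ^ 2). apply pow_lt; lra.
    unfold Rdiv. rewrite Rmult_assoc, Rinv_l, Rmult_1_r by (apply pow_nonzero; lra).
    assert (t ^ a * (INR (S a) * (1 - t) - t * q) <= t ^ a * (INR (S a) * (1 - t) * q))
      by (apply Rmult_le_compat_l; lra).
    assert (t ^ a * (INR (S a) * (1 - t) * q) <= q * q).
    { replace (t ^ a * (INR (S a) * (1 - t) * q)) with ((INR (S a) * t ^ a * (1 - t)) * q) by ring.
      apply Rmult_le_compat_r; lra. }
    replace (q ^ 2) with (q * q) by ring. lra.
Qed.

Lemma uu_mono : forall a s t, 0 <= s -> s <= t -> t < 1 -> 0 <= uu a t - uu a s <= t - s.
Proof.
  intros. destruct (Req_dec s t). subst. lra.
  destruct (MVT_cor2 (uu a) (uu' a) s t) as [c [Hc1 Hc2]]. lra.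
  - intros c Hc. apply is_derive_Reals. apply uu_deriv. lra.
  - rewrite Hc1. assert (B := uu'_bounds a c ltac:(lra)). split; nra.
Qed.

Ltac fixINR :=
  repeat match goal with |- context [match ?a with O => ?x | S _ => ?y end] =>
    change (match a with O => x | S _ => y end) with (INR (S a)) end.

Definition CC a b t := INR (S b) * INR (S a) * t ^ (S a) * (1 - t) / (1 - t ^ (S a)).
Definition Sf a b t := ln t - ln (1 - t) - INR (S b) * ln (1 - t ^ (S a)).
Definition NN a t := INR (S a) * (1 - t) - t + INR (S a) * uu a t.
Definition DD a b t := 1 + INR (S b) * INR (S a) * uu a t.
Definition HH a b k t := ln (CC a b t) - k * Sf a b t.
Definition HH' a b k t := (NN a t - k * DD a b t) / (t * (1 - t)).

Lemma CC_pos : forall a b t, 0 < t < 1 -> 0 < CC a b t.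
Proof.
  intros. unfold CC. assert (Hq := q_pos a t ltac:(lra)).
  apply Rdiv_lt_0_compat; auto.
  assert (0 < INR (S b)) by (apply lt_0_INR; lia).
  assert (0 < INR (S a)) by (apply lt_0_INR; lia).
  assert (0 < t ^ S a) by (apply pow_lt; lra).
  apply Rmult_lt_0_compat; [apply Rmult_lt_0_compat; [apply Rmult_lt_0_compat|]|]; lra.
Qed.

Lemma HH_deriv : forall a b k t, 0 < t < 1 -> is_derive (HH a b k) t (HH' a b k t).
Proof.
  intros. assert (Hq := q_pos a t ltac:(lra)). assert (Hc := CC_pos a b t H).
  unfold HH, HH', NN, DD, uu, Sf. unfold CC in *. auto_derive.
  - fixINR. simpl pow. simpl pow in Hq, Hc. unfold Rminus, Rdiv in *. repeat split; lra.
  - fixINR. simpl pow. simpl pow in Hq, Hc. unfold Rminus, Rdiv in *.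
    assert (INR (S a) <> 0) by (apply not_0_INR; lia).
    assert (INR (S b) <> 0) by (apply not_0_INR; lia).
    assert (t ^ a <> 0) by (apply pow_nonzero; lra).
    field. repeat split; lra.
Qed.

Lemma uu_nonneg : forall a t, 0 <= t < 1 -> 0 <= uu a t.
Proof.
  intros. unfold uu. assert (Hq := q_pos a t H).
  apply Rdiv_le_0_compat; auto. apply Rmult_le_pos. apply pow_le; lra. lra.
Qed.

Lemma E_sign : forall a b x c, 0 < x <= 1/2 -> 0 < c < 1 ->
  (c <= x -> 0 <= NN a c * DD a b x - NN a x * DD a b c) /\
  (x <= c -> NN a c * DD a b x - NN a x * DD a b c <= 0).
Proof.
  intros a b x c Hx Hc.
  assert (HM : 1 <= INR (S a)) by (apply (le_INR 1); lia).
  assert (HD : 1 <= INR (S b)) by (apply (le_INR 1); lia).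
  assert (Hux := uu_nonneg a x ltac:(lra)).
  assert (E : NN a c * DD a b x - NN a x * DD a b c =
     (INR (S a) + 1) * (x - c) * (1 + INR (S b) * INR (S a) * uu a x)
     + INR (S a) * (uu a x - uu a c) * (INR (S b) * (INR (S a) - (INR (S a) + 1) * x) - 1)).
  { unfold NN, DD. ring. }
  rewrite E. clear E.
  set (M := INR (S a)) in *. set (Dd := INR (S b)) in *.
  set (ux := uu a x) in *.
  assert (Hal : 0 <= M - (M + 1) * x) by nra.
  assert (Hc' : -1 <= Dd * (M - (M + 1) * x) - 1) by nra.
  assert (Hp : 1 <= 1 + Dd * M * ux).
  { assert (0 <= Dd * M * ux) by (apply Rmult_le_pos; [apply Rmult_le_pos|]; lra). lra. }
  set (c' := Dd * (M - (M + 1) * x) - 1) in *.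
  split; intro Hle.
  - destruct (uu_mono a c x ltac:(lra) Hle ltac:(lra)) as [U1 U2].
    change (uu a x) with ux in U1, U2. set (uc := uu a c) in *.
    assert (0 <= (M + 1) * (x - c) * (1 + Dd * M * ux - 1)) by
      (apply Rmult_le_pos; [apply Rmult_le_pos|]; lra).
    assert (0 <= M * (ux - uc) * (c' + 1)) by (apply Rmult_le_pos; [apply Rmult_le_pos|]; lra).
    assert (M * (ux - uc) <= M * (x - c)) by (apply Rmult_le_compat_l; lra).
    nra.
  - destruct (uu_mono a x c ltac:(lra) Hle ltac:(lra)) as [U1 U2].
    change (uu a x) with ux in U1, U2. set (uc := uu a c) in *.
    assert (0 <= (M + 1) * (c - x) * (1 + Dd * M * ux - 1)) by
      (apply Rmult_le_pos; [apply Rmult_le_pos|]; lra).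
    assert (0 <= M * (uc - ux) * (c' + 1)) by (apply Rmult_le_pos; [apply Rmult_le_pos|]; lra).
    assert (M * (uc - ux) <= M * (c - x)) by (apply Rmult_le_compat_l; lra).
    nra.
Qed.

Lemma DD_pos : forall a b t, 0 <= t < 1 -> 0 < DD a b t.
Proof.
  intros. unfold DD. assert (H0 := uu_nonneg a t H).
  assert (0 <= INR (S b) * INR (S a) * uu a t) by
    (apply Rmult_le_pos; [apply Rmult_le_pos|]; auto using pos_INR). lra.
Qed.

Lemma HH'_sign : forall a b x c, 0 < x <= 1/2 -> 0 < c < 1 ->
  (c <= x -> 0 <= HH' a b (NN a x / DD a b x) c) /\
  (x <= c -> HH' a b (NN a x / DD a b x) c <= 0).
Proof.
  intros. destruct (E_sign a b x c H H0) as [E1 E2].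
  assert (Hdx := DD_pos a b x ltac:(lra)).
  assert (Ec : HH' a b (NN a x / DD a b x) c =
     (NN a c * DD a b x - NN a x * DD a b c) / DD a b x / (c * (1 - c))).
  { unfold HH'. field. split; lra. }
  rewrite Ec. assert (0 < c * (1 - c)) by nra.
  split; intro Hle.
  - apply Rdiv_le_0_compat; auto. apply Rdiv_le_0_compat; auto.
  - unfold Rdiv. apply Rmult_le_0_r. apply Rmult_le_0_r; auto.
    left; apply Rinv_0_lt_compat; auto. left; apply Rinv_0_lt_compat; auto.
Qed.

Lemma tangent : forall a b x t, 0 < x <= 1/2 -> 0 < t < 1 ->
  HH a b (NN a x / DD a b x) t <= HH a b (NN a x / DD a b x) x.
Proof.
  intros. set (k := NN a x / DD a b x).
  destruct (Rtotal_order t x) as [Hlt|[Heq|Hgt]].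
  - destruct (MVT_cor2 (HH a b k) (HH' a b k) t x Hlt) as [c [Hc1 Hc2]].
    + intros c Hc. apply is_derive_Reals. apply HH_deriv. lra.
    + destruct (HH'_sign a b x c H ltac:(lra)) as [S1 _].
      assert (0 <= HH' a b k c * (x - t)) by (apply Rmult_le_pos; [apply S1|]; lra). lra.
  - subst; lra.
  - destruct (MVT_cor2 (HH a b k) (HH' a b k) x t Hgt) as [c [Hc1 Hc2]].
    + intros c Hc. apply is_derive_Reals. apply HH_deriv. lra.
    + destruct (HH'_sign a b x c H ltac:(lra)) as [_ S2].
      assert (HH' a b k c * (t - x) <= 0).
      { apply Rmult_le_0_r. apply S2; lra. lra. } lra.
Qed.


Lemma L_cyc : forall a b t w, 0 <= t < 1 -> FF a b t = w ->
  ln w - ln (1 - w) = INR (S b) * ln (1 - t ^ (S a)).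
Proof.
  intros. assert (Hg := gg_pos a b t H). assert (Hq := q_pos a t H).
  unfold FF in H0. subst w.
  rewrite <- ln_pow by lra. fold (gg a b t).
  rewrite <- ln_div.
  - f_equal. field. split; lra.
  - apply Rdiv_lt_0_compat; lra.
  - replace (1 - gg a b t / (1 + gg a b t)) with (/ (1 + gg a b t)) by (field; lra).
    apply Rinv_0_lt_compat; lra.
Qed.

Lemma Sf_pair : forall a b z w, 0 < z < 1 -> 0 < w < 1 -> FF a b z = w -> FF a b w = z ->
  Sf a b z + Sf a b w = 0.
Proof.
  intros. unfold Sf.
  rewrite <- (L_cyc a b z w) by (auto; lra).
  rewrite <- (L_cyc a b w z) by (auto; lra). ring.
Qed.

Lemma CC_prod : forall a b x z w, 0 < x <= 1/2 -> FF a b x = x ->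
  0 < z < 1 -> 0 < w < 1 -> FF a b z = w -> FF a b w = z ->
  CC a b z * CC a b w <= CC a b x * CC a b x.
Proof.
  intros.
  assert (T1 := tangent a b x z H H1). assert (T2 := tangent a b x w H H2).
  assert (P1 := Sf_pair a b z w H1 H2 H3 H4).
  assert (P0 := Sf_pair a b x x ltac:(lra) ltac:(lra) H0 H0).
  unfold HH in *. set (k := NN a x / DD a b x) in *.
  assert (Hlz := CC_pos a b z H1). assert (Hlw := CC_pos a b w H2).
  assert (Hlx := CC_pos a b x ltac:(lra)).
  assert (Hl : ln (CC a b z * CC a b w) <= ln (CC a b x * CC a b x)).
  { rewrite !ln_mult by lra. assert (k * Sf a b z + k * Sf a b w = 0) by (rewrite <- Rmult_plus_distr_l, P1; ring).
    assert (k * Sf a b x = 0) by (assert (Sf a b x = 0) by lra; rewrite H6; ring). lra. }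
  destruct (Rle_or_lt (CC a b z * CC a b w) (CC a b x * CC a b x)) as [Hle|Hlt]; auto.
  exfalso. assert (ln (CC a b x * CC a b x) < ln (CC a b z * CC a b w)).
  { apply ln_increasing; auto. apply Rmult_lt_0_compat; auto. }
  lra.
Qed.

Lemma FF'_prod : forall a b z w, 0 < z < 1 -> 0 < w < 1 -> FF a b z = w -> FF a b w = z ->
  FF' a b w * FF' a b z = CC a b z * CC a b w.
Proof.
  intros. rewrite (FF'_cyc a b z w) by (auto; lra). rewrite (FF'_cyc a b w z) by (auto; lra).
  unfold CC. assert (Hq1 := q_pos a z ltac:(lra)). assert (Hq2 := q_pos a w ltac:(lra)).
  simpl pow. field. simpl in Hq1, Hq2. split; lra.
Qed.

Lemma FF'_fix : forall a b x, 0 <= x < 1 -> FF a b x = x -> FF' a b x = - CC a b x.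
Proof.
  intros. rewrite (FF'_cyc a b x x) by auto. unfold CC.
  assert (Hq := q_pos a x H). simpl pow. simpl in Hq. field. lra.
Qed.


Lemma cont_eps : forall f c, continuity_pt f c -> forall eps, 0 < eps ->
  exists del, 0 < del /\ forall s, Rabs (s - c) < del -> Rabs (f s - f c) < eps.
Proof.
  intros f c H eps He. destruct (H eps He) as [al [Hal H']].
  exists al. split; auto. intros s Hs. destruct (Req_dec s c) as [->|Hne].
  - rewrite Rminus_eq_0, Rabs_R0. auto.
  - apply (H' s). split. split. constructor. auto. exact Hs.
Qed.

Lemma deriv_right_neg : forall f y l, l < 0 -> derivable_pt_lim f y l -> f y = 0 ->
  exists del, 0 < del /\ forall h, 0 < h < del -> f (y + h) < 0.
Proof.
  intros f y l Hl Hd H0. destruct (Hd (- l / 2) ltac:(lra)) as [del Hdel].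
  exists del. split. apply cond_pos. intros h Hh.
  assert (A := Hdel h ltac:(lra) ltac:(rewrite Rabs_pos_eq; lra)).
  rewrite H0, Rminus_0_r in A. apply Rabs_def2 in A. destruct A as [A1 A2].
  assert (f (y + h) / h < 0) by lra.
  assert (f (y + h) = f (y + h) / h * h) by (field; lra). nra.
Qed.

Lemma deriv_left_pos : forall f y l, l < 0 -> derivable_pt_lim f y l -> f y = 0 ->
  exists del, 0 < del /\ forall h, 0 < h < del -> 0 < f (y - h).
Proof.
  intros f y l Hl Hd H0. destruct (Hd (- l / 2) ltac:(lra)) as [del Hdel].
  exists del. split. apply cond_pos. intros h Hh.
  assert (A := Hdel (- h) ltac:(lra) ltac:(rewrite Rabs_Ropp, Rabs_pos_eq; lra)).
  rewrite H0, Rminus_0_r in A. apply Rabs_def2 in A. destruct A as [A1 A2].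
  replace (y + - h) with (y - h) in * by ring.
  assert (f (y - h) / - h < 0) by lra.
  assert (f (y - h) = f (y - h) / - h * - h) by (field; lra). nra.
Qed.

Lemma topo : forall (psi : R -> R) lo hi,
  (forall t, lo <= t <= hi -> continuity_pt psi t) ->
  (forall y, lo <= y <= hi -> psi y = 0 -> exists l, l < 0 /\ derivable_pt_lim psi y l) ->
  forall y1 y2, lo <= y1 -> y1 < y2 -> y2 <= hi -> psi y1 = 0 -> psi y2 = 0 -> False.
Proof.
  intros psi lo hi Hc Hd y1 y2 H1 H12 H2 Z1 Z2.
  destruct (Hd y1 ltac:(lra) Z1) as [l1 [Hl1 D1]].
  destruct (deriv_right_neg psi y1 l1 Hl1 D1 Z1) as [d1 [Hd1 R1]].
  set (p := y1 + Rmin (d1 / 2) ((y2 - y1) / 2)).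
  assert (Hp1 : y1 < p) by (unfold p; apply Rmin_case; lra).
  assert (Hp2 : p < y2) by (unfold p; assert (Rmin (d1/2) ((y2-y1)/2) <= (y2-y1)/2) by apply Rmin_r; lra).
  assert (Pp : psi p < 0).
  { unfold p. apply R1. split. apply Rmin_case; lra.
    assert (Rmin (d1/2) ((y2-y1)/2) <= d1/2) by apply Rmin_l; lra. }
  set (T := fun t => p <= t <= y2 /\ forall s, p <= s <= t -> psi s < 0).
  assert (Tb : bound T) by (exists y2; intros t [Ht _]; lra).
  assert (Tp : exists t, T t) by (exists p; split; [lra|intros s Hs; replace s with p by lra; auto]).
  destruct (completeness T Tb Tp) as [c [Hub Hlub]].
  assert (Hpc : p <= c) by (apply Hub; destruct Tp; unfold T; split; [lra|intros s Hs; replace s with p by lra; auto]).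
  assert (Hcy : c <= y2) by (apply Hlub; intros t [Ht _]; lra).
  assert (A : forall s, p <= s < c -> psi s < 0).
  { intros s Hs. destruct (classic (exists t, T t /\ s < t)) as [[t [[Tt1 Tt2] Hst]]|Hn].
    - apply Tt2. lra.
    - exfalso. assert (c <= s).
      { apply Hlub. intros t Tt. destruct (Rle_or_lt t s); auto. exfalso; apply Hn; eauto. }
      lra. }
  assert (Hcz : psi c = 0).
  { destruct (Rtotal_order (psi c) 0) as [Hn|[Hz|Hpos]]; auto.
    - exfalso. assert (Hcy' : c < y2) by (destruct (Req_dec c y2); [subst; lra|lra]).
      destruct (cont_eps psi c (Hc c ltac:(lra)) (- psi c) ltac:(lra)) as [e [He Hce]].
      set (t' := Rmin (c + e / 2) y2).
      assert (Tt : T t').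
      { unfold t'. split. split; [apply Rmin_case; lra|apply Rmin_r].
        intros s Hs. destruct (Rlt_or_le s c). apply A; lra.
        assert (Rmin (c + e/2) y2 <= c + e/2) by apply Rmin_l.
        assert (Ha := Hce s ltac:(rewrite Rabs_pos_eq; lra)).
        apply Rabs_def2 in Ha. lra. }
      assert (t' <= c) by (apply Hub; auto).
      unfold t' in H. revert H. apply Rmin_case; lra.
    - exfalso. assert (Hpc' : p < c) by (destruct (Req_dec p c); [subst; lra|lra]).
      destruct (cont_eps psi c (Hc c ltac:(lra)) (psi c) ltac:(lra)) as [e [He Hce]].
      set (s := Rmax p (c - e / 2)).
      assert (Hs1 : p <= s) by apply Rmax_l.
      assert (Hs2 : s < c) by (unfold s; apply Rmax_case; lra).
      assert (Hs3 : c - e / 2 <= s) by apply Rmax_r.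
      assert (Ha := Hce s ltac:(rewrite Rabs_minus_sym, Rabs_pos_eq; lra)).
      apply Rabs_def2 in Ha. assert (psi s < 0) by (apply A; lra). lra. }
  assert (Hpc' : p < c) by (destruct (Req_dec p c); [subst; lra|lra]).
  destruct (Hd c ltac:(lra) Hcz) as [l [Hl Dc]].
  destruct (deriv_left_pos psi c l Hl Dc Hcz) as [d [Hd0 L]].
  set (h := Rmin (d / 2) ((c - p) / 2)).
  assert (Hh1 : 0 < h) by (unfold h; apply Rmin_case; lra).
  assert (Hh2 : h <= d / 2) by apply Rmin_l.
  assert (Hh3 : h <= (c - p) / 2) by apply Rmin_r.
  assert (X1 := L h ltac:(lra)). assert (X2 := A (c - h) ltac:(lra)). lra.
Qed.


Lemma psi_deriv : forall a b t, 0 <= t <= 1 ->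
  derivable_pt_lim (fun t => FF a b (FF a b t) - t) t (FF' a b t * FF' a b (FF a b t) - 1).
Proof.
  intros. apply is_derive_Reals.
  assert (H0 := FF_range a b t H).
  assert (H1 := is_derive_comp (FF a b) (FF a b) t _ _ (FF_deriv a b (FF a b t) ltac:(lra)) (FF_deriv a b t H)).
  assert (H2 := is_derive_minus _ _ t _ _ H1 (is_derive_id t)).
  exact H2.
Qed.

Lemma main_FF : forall a b,
  (forall s t : R, 0 <= s -> s < t -> t <= 1 -> FF a b t < FF a b s) /\
  exists x : R,
    (0 <= x <= 1 /\ FF a b x = x) /\
    (forall y : R, 0 <= y <= 1 -> FF a b y = y -> y = x) /\
    ex_derive (FF a b) x /\
    Rabs (Derive (FF a b) x) =
      (INR (S b) * INR (S a) * x ^ (S a) * (1 - x)) / (1 - x ^ (S a)) /\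
    (Rabs (Derive (FF a b) x) < 1 ->
       forall z : R, 0 <= z <= 1 -> FF a b (FF a b z) = z -> z = x).
Proof.
  intros a b. split. { intros; apply FF_decr; auto. }
  destruct (fix_exists a b) as [x [Hx Hfx]].
  assert (Hx2 : x <= 1/2) by (assert (H := FF_range a b x Hx); lra).
  assert (Hx0 : 0 < x).
  { destruct (Req_dec x 0) as [E|E]; [|lra]. rewrite E, FF_0 in Hfx. lra. }
  assert (HD : Derive (FF a b) x = - CC a b x).
  { rewrite (is_derive_unique _ _ _ (FF_deriv a b x Hx)). apply FF'_fix; auto. lra. }
  assert (Hcx := CC_pos a b x ltac:(lra)).
  assert (HA : Rabs (Derive (FF a b) x) = CC a b x).
  { rewrite HD, Rabs_Ropp, Rabs_pos_eq; lra. }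
  exists x. split; [auto|]. split.
  { intros y Hy Hfy. apply (fix_unique a b x y); auto. }
  split. { exists (FF' a b x). apply FF_deriv; auto. }
  split. { rewrite HA. reflexivity. }
  rewrite HA. intros Hlt z Hz Hzz.
  set (psi := fun t => FF a b (FF a b t) - t).
  assert (Hc : forall t, 0 <= t <= 1 -> continuity_pt psi t).
  { intros t Ht. apply derivable_continuous_pt. eexists. apply (psi_deriv a b t Ht). }
  assert (Hd : forall y, 0 <= y <= 1 -> psi y = 0 -> exists l, l < 0 /\ derivable_pt_lim psi y l).
  { intros y Hy Hpy. unfold psi in Hpy. cbv beta in Hpy.
    assert (Hw := FF_range a b y Hy).
    set (w := FF a b y) in *.
    assert (Hyw : FF a b w = y) by lra.
    assert (Hy2 := FF_range a b w ltac:(lra)).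
    assert (Hy0 : 0 < y).
    { destruct (Req_dec y 0) as [E|E]; [|lra]. exfalso.
      unfold w in Hyw. rewrite E, FF_0 in Hyw.
      assert (0 < FF a b (1/2)) by (apply FF_pos; lra). lra. }
    assert (Hw0 : 0 < w). { unfold w. apply FF_pos. lra. }
    exists (FF' a b y * FF' a b w - 1). split.
    - rewrite Rmult_comm, (FF'_prod a b y w) by (auto; lra).
      assert (CC a b y * CC a b w <= CC a b x * CC a b x)
        by (apply CC_prod; auto; lra).
      nra.
    - apply psi_deriv; auto. }
  destruct (Rtotal_order z x) as [Hl|[He|Hg]]; auto.
  - exfalso. apply (topo psi 0 1 Hc Hd z x); try lra. unfold psi; lra. unfold psi; rewrite !Hfx; lra.
  - exfalso. apply (topo psi 0 1 Hc Hd x z); try lra. unfold psi; rewrite !Hfx; lra. unfold psi; lra.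
Qed.

Theorem lemma56 (k Delta : nat) (hk : (2 <= k)%nat) (hD : (2 <= Delta)%nat) :
  (forall a b : R, 0 <= a -> a < b -> b <= 1 -> f56 k Delta b < f56 k Delta a) /\
  exists x : R,
    (0 <= x <= 1 /\ f56 k Delta x = x) /\
    (forall y : R, 0 <= y <= 1 -> f56 k Delta y = y -> y = x) /\
    ex_derive (f56 k Delta) x /\
    Rabs (Derive (f56 k Delta) x) =
      (INR (Delta - 1) * INR (k - 1) * x ^ (k - 1) * (1 - x)) / (1 - x ^ (k - 1)) /\
    (Rabs (Derive (f56 k Delta) x) < 1 ->
       forall z : R, 0 <= z <= 1 -> f56 k Delta (f56 k Delta z) = z -> z = x).
Proof.
  destruct k as [|[|a]]; [lia|lia|]. destruct Delta as [|[|b]]; [lia|lia|].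
  exact (main_FF a b).
Qed.
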